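(* There is an absolute constant $c>0$ such that the following holds. Let $X,Y$ be a section-pair with $m\ge 12$ chords, and suppose that each vertex of $X$ is incident to at most one chord. Then there are two paths $P,P'$ in $H(X,Y)$ between $x^{t}$ and $y^{t}$ such that $|P'|\ge |P|+cm$, and there are two paths $Q,Q'$ in $H(X,Y)$ between $x^{b}$ and $y^{b}$ such that $|Q'|\ge|Q|+cm$.
   Context: A section-pair in a graph $G$ is a pair $X,Y$ of vertex-disjoint paths; the two endpoints of $X$ are designated its top $x^{t}$ and bottom $x^{b}$, and those of $Y$ its top $y^t$ and bottom $y^b$. A chord is an edge of $G$ with one endpoint in $X$ and one in $Y$. $H(X,Y)$ is the graph with vertex set $V(X)\cup V(Y)$ whose edges are the edges of $X$, the edges of $Y$ and the chords. $|P|$ is the number of edges of a path $P$. *)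

(* Defs.v *)
From mathcomp Require Import all_boot all_order all_algebra.
Set Implicit Arguments. Unset Strict Implicit. Unset Printing Implicit Defensive.

Section Defs.
Variable T : finType.

(* A path in a graph with adjacency relation r, between a and b:
   the vertex sequence a :: s, consecutive vertices adjacent, all vertices
   distinct, ending in b.  Its number of edges is size s. *)
Definition gpath (r : rel T) (a b : T) (s : seq T) : Prop :=
  [/\ path r a s, uniq (a :: s) & last a s = b].

Definition path_edge (p : seq T) (u v : T) : bool :=
  ((u, v) \in zip p (behead p)) || ((v, u) \in zip p (behead p)).

Definition chord (e : rel T) (X Y : seq T) (u v : T) : bool :=
  e u v && (((u \in X) && (v \in Y)) || ((u \in Y) && (v \in X))).

(* The set of chords, each counted once as the ordered pair (x, y) with
   x on X and y on Y (X and Y are vertex-disjoint). *)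
Definition chords (e : rel T) (X Y : seq T) : {set T * T} :=
  [set p : T * T | (p.1 \in X) && (p.2 \in Y) && e p.1 p.2].

Definition Hrel (e : rel T) (X Y : seq T) : rel T :=
  fun u v => [|| path_edge X u v, path_edge Y u v | chord e X Y u v].

End Defs.

(* Main.v *)
Require Import Defs.
From mathcomp Require Import all_boot all_order all_algebra.
From Stdlib Require Classical_Prop.
From mathcomp Require Import zify.
From mathcomp.algebra_tactics Require Import lra.
Set Implicit Arguments. Unset Strict Implicit. Unset Printing Implicit Defensive.
Import Order.TTheory GRing.Theory Num.Theory.
Section Comb.
Local Open Scope ring_scope.
Local Notation T := (nat * nat)%type.
Variable (L : T -> int).

Fixpoint alt (s : seq T) : int := if s is c :: s' then L c - alt s' else 0.
Definition Zv (s : seq T) : int := (size s)%:Z - 1 + alt s.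
Fixpoint TV (s : seq T) : int :=
  if s is c :: s' then (if s' is d :: _ then `|L d - L c| + TV s' else 0) else 0.

Lemma TVcc c d s : TV [:: c, d & s] = `|L d - L c| + TV (d :: s).
Proof. by []. Qed.

Lemma TV_ge0 s : 0 <= TV s.
Proof. elim: s => [|c s IH] //. case: s IH => [|d s] IH //. rewrite TVcc. have := normr_ge0 (L d - L c). lia. Qed.

Lemma Zv1 c : Zv [:: c] = L c.
Proof. rewrite /Zv /=. lia. Qed.

Lemma Zv2 x a s : Zv [:: x, a & s] = Zv s + 2 + L x - L a.
Proof. rewrite /Zv /=. lia. Qed.

Lemma TV_lemma n (l : seq T) x mu :
  (size l <= n)%N -> (forall c, c \in x :: l -> mu <= L c) ->
  exists s, [/\ subseq s (x :: l), odd (size s) & TV (x :: l) + L x + mu <= 2 * Zv s].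
Proof.
elim: n l x => [|n IH] l x.
  case: l => // _ hmu; exists [:: x]; split => //; rewrite Zv1 /=.
  have := hmu x (mem_head _ _); lia.
case: l => [|a l1] hs hmu.
  exists [:: x]; split => //; rewrite Zv1 /=. have := hmu x (mem_head _ _); lia.
have hx := hmu x (mem_head _ _).
have ha : mu <= L a by apply: hmu; rewrite !inE eqxx orbT.
have hmu1 : forall c, c \in a :: l1 -> mu <= L c.
  by move=> c hc; apply: hmu; rewrite inE hc orbT.
case: (lerP (L x) (L a)) => hxa.
  have [s [h1 h2 h3]] := IH l1 a hs hmu1.
  exists s; split => //; first by apply: (subseq_trans h1); apply: subseq_cons.
  move: h3; rewrite TVcc. lia.
case: l1 hs hmu hmu1 => [|b l2] hs hmu hmu1.
  exists [:: x]; split; [by rewrite /= eqxx | by [] | rewrite Zv1 TVcc /=; lia].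
have hb : mu <= L b by apply: hmu1; rewrite !inE eqxx orbT.
case: (lerP (L b) (L a)) => hba.
  have hmu2 : forall c, c \in x :: b :: l2 -> mu <= L c.
    move=> c; rewrite in_cons; case/orP => [/eqP -> | hc]; first exact: hx.
    by apply: hmu1; rewrite in_cons hc orbT.
  have [s [h1 h2 h3]] := IH (b :: l2) x hs hmu2.
  exists s; split => //.
    apply: (subseq_trans h1). exact: (cat_subseq (subseq_refl [:: x]) (subseq_cons (b :: l2) a)).
  move: h3. rewrite !TVcc. lia.
have hmu3 : forall c, c \in b :: l2 -> mu <= L c.
  by move=> c hc; apply: hmu1; rewrite inE hc orbT.
have [s0 [h1 h2 h3]] := IH l2 b (leq_trans (leqnSn _) hs) hmu3.
exists [:: x, a & s0]; split.
- exact: (cat_subseq (subseq_refl [:: x; a]) h1).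
- by rewrite /=; rewrite negbK.
- rewrite Zv2. move: h3. rewrite !TVcc. lia.
Qed.

Lemma alt_rcons s y : alt (rcons s y) = alt s + (if odd (size s) then - L y else L y).
Proof.
elim: s => [|c s IH] /=; first lia.
rewrite IH; case: (odd (size s)) => /=; lia.
Qed.

Lemma len_lemma (l : seq T) x mu :
  (forall c, c \in x :: l -> mu <= L c) ->
  exists s, [/\ subseq s (x :: l), odd (size s) & (size l)%:Z - 2 + mu <= Zv s].
Proof.
move=> hmu.
have hx := hmu x (mem_head _ _).
case: (leqP (size l) 1) => hl.
  exists [:: x]; split; [by rewrite /= eqxx sub0seq | by [] | rewrite Zv1; lia].
pose l2 := if odd (size l) then take (size l).-1 l else l.
have hl2 : subseq l2 l by rewrite /l2; case: ifP => _ //; exact: take_subseq.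
have sl2 : size l2 = if odd (size l) then (size l).-1 else size l.
  rewrite /l2; case: ifP => _ //; rewrite size_take; case: (size l) hl => //= k _; by rewrite ltnSn.
have ev : ~~ odd (size l2).
  rewrite sl2; case: ifP => h; last by rewrite h.
  by move: h hl; case: (size l) => //= k h _.
have ne : (0 < size l2)%N by rewrite sl2; case: ifP => _; lia.
move: ne hl2 sl2 ev; case/lastP: l2 => // mid y _ hl2 sl2 ev.
have od : odd (size mid) by move: ev; rewrite size_rcons /=; case: (odd (size mid)).
have hy : mu <= L y.
  apply: hmu; rewrite inE; apply/orP; right; apply: (mem_subseq hl2); by rewrite mem_rcons mem_head.
have sub1 : subseq mid (x :: l).
  apply: (subseq_trans _ (subseq_cons _ _)); apply: (subseq_trans _ hl2). by apply: subseq_rcons.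
have sub2 : subseq (x :: rcons mid y) (x :: l) by exact: (cat_subseq (subseq_refl [:: x]) hl2).
have key : Zv (x :: rcons mid y) + Zv mid = 2 * (size mid)%:Z + L x + L y.
  rewrite /Zv /= alt_rcons od size_rcons. lia.
have sz : (size l)%:Z - 2 <= (size mid)%:Z.
  move: sl2; rewrite size_rcons; case: ifP => _; lia.
case: (lerP (Zv mid) (Zv (x :: rcons mid y))) => h.
  exists (x :: rcons mid y); split.
  - exact: sub2.
  - by rewrite /= size_rcons /= od.
  - lia.
exists mid; split; [exact: sub1 | exact: od | lia].
Qed.

Fixpoint gamT (b : bool) (tl : seq (T * T)) : seq T :=
  if tl is st :: tl' then (if b then st.2 else st.1) :: gamT (~~ b) tl' else [::].

Fixpoint sumd (tl : seq (T * T)) : int :=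
  if tl is st :: tl' then L st.2 - L st.1 + sumd tl' else 0.

Lemma TV_tiles tl :
  sumd (behead tl) <= TV (gamT true tl) + TV (gamT false tl) + 2 * TV (map fst tl).
Proof.
elim: tl => [|st1 tl IH] /=; first lia.
case: tl IH => [|st2 tl] /= IH; first lia.
move: IH. case: tl => [|st3 tl] /=; lia.
Qed.

End Comb.
Section Tiles.
Variable CS : seq (nat * nat).
Definition ltfst (a b : nat * nat) : bool := (a.1 < b.1)%N.
Hypothesis srt : sorted ltfst CS.
Local Notation d0 := ((0%N, 0%N) : nat * nat).
Definition pp i := (nth d0 CS i).1.
Definition qq i := (nth d0 CS i).2.

Lemma ltfst_tr : transitive ltfst.
Proof. move=> a b c; rewrite /ltfst; lia. Qed.

Lemma pp_lt i j : (i < j)%N -> (j < size CS)%N -> (pp i < pp j)%N.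
Proof.
move=> hij hj; have hi : (i < size CS)%N by lia.
by have := @sorted_ltn_nth _ ltfst ltfst_tr d0 CS srt i j hi hj hij.
Qed.

Lemma pp_mono i k : (i + k < size CS)%N -> (pp i + k <= pp (i + k))%N.
Proof.
elim: k => [|k IH] h; first by rewrite !addn0 leqnn.
have h1 : (i + k < size CS)%N by lia.
have := IH h1. have := @pp_lt (i + k) (i + k.+1) ltac:(lia) h. lia.
Qed.

Definition sfn (i : nat) : nat := find (fun c : nat * nat => (c.2 <= qq i)%N) CS.

Lemma sfn_le i : (i < size CS)%N -> (sfn i <= i)%N.
Proof.
move=> hi; rewrite leqNgt; apply/negP => h.
by have := before_find d0 h; rewrite /= leqnn.
Qed.

Lemma sfn_q i : (i < size CS)%N -> (qq (sfn i) <= qq i)%N.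
Proof.
move=> hi; have hs : has (fun c : nat * nat => (c.2 <= qq i)%N) CS.
  by rewrite has_find; apply: (leq_ltn_trans (sfn_le hi) hi).
exact: (nth_find d0 hs).
Qed.

Lemma sfn_before i j : (j < sfn i)%N -> (qq i < qq j)%N.
Proof. move=> h; have := before_find d0 h; rewrite /qq /=; lia. Qed.

Fixpoint tl_aux (f n : nat) : seq (nat * nat) :=
  if f is f'.+1 then
    (if n is n'.+1 then rcons (tl_aux f' (sfn n')) (sfn n', n') else [::])
  else [::].

Definition tile_ok (st : nat * nat) : bool :=
  [&& (st.1 <= st.2)%N, (st.2 < size CS)%N, (qq st.1 <= qq st.2)%N &
      [forall j : 'I_(st.1), (qq st.2 < qq j)%N]].

Definition adj (a b : nat * nat) : bool := b.1 == a.2.+1.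

Fixpoint sumt (tl : seq (nat * nat)) : nat :=
  if tl is st :: tl' then (st.2 - st.1).+1 + sumt tl' else 0.

Lemma sumt_rcons tl st : sumt (rcons tl st) = sumt tl + (st.2 - st.1).+1.
Proof. elim: tl => [|a tl IH] /=; lia. Qed.

Lemma tl_aux_ok f n : (n <= f)%N -> (n <= size CS)%N ->
  let tl := tl_aux f n in
  [/\ all tile_ok tl, sorted adj tl, sumt tl = n,
      (n == 0%N) = (tl == [::]) & (0 < n)%N -> (last d0 tl).2 = n.-1].
Proof.
elim: f n => [|f IH] n hnf hn.
  by case: n hnf hn.
case: n hnf hn => [|n] hnf hn //=.
have hn' : (n < size CS)%N by [].
have hs := sfn_le hn'.
have [a1 a2 a3 a4 a5] := IH (sfn n) (leq_trans hs hnf) (leq_trans hs (ltnW hn')).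
have okst : tile_ok (sfn n, n).
  apply/and4P; split => //=; first exact: sfn_q.
  apply/forallP => j; exact: sfn_before (ltn_ord j).
split.
- by rewrite all_rcons okst a1.
- move: a2 a4 a5; case: (tl_aux f (sfn n)) => [|b tl] //= a2 a4 a5.
  rewrite rcons_path a2 /= /adj /=.
  have h0 : (0 < sfn n)%N by case: (sfn n) a4.
  rewrite (a5 h0). by case: (sfn n) h0.
- rewrite sumt_rcons a3 /=. lia.
- by case: (tl_aux f (sfn n)).
- by rewrite last_rcons.
Qed.

End Tiles.
Definition Rc (c d : nat * nat) : bool := (c.1 < d.1)%N && (d.2 < c.2)%N.
Lemma Rc_tr : transitive Rc.
Proof. move=> b a c; rewrite /Rc; lia. Qed.

Definition Lc (c : nat * nat) : int := (c.1 + c.2 + 1)%:Z.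
Lemma LcE c : Lc c = Posz (c.1 + c.2 + 1). Proof. by []. Qed.

Lemma exists_min (T : eqType) (F : T -> int) (x : T) (s : seq T) :
  exists c, c \in x :: s /\ forall d, d \in x :: s -> (F c <= F d)%R.
Proof.
elim: s x => [|y s IH] x.
  by exists x; split => [|d]; rewrite ?inE ?mem_head // => /eqP ->.
have [c [hc hmin]] := IH y.
case: (lerP (F x) (F c)) => h.
  exists x; split; first exact: mem_head.
  move=> d; rewrite in_cons => /orP [/eqP -> //|hd]. apply: (le_trans h); exact: hmin.
exists c; split; first by rewrite in_cons hc orbT.
move=> d; rewrite in_cons => /orP [/eqP ->|hd]; [exact: ltW | exact: hmin].
Qed.

Section Core.
Variable CS : seq (nat * nat).
Hypothesis srt : sorted ltfst CS.
Local Notation d0 := ((0%N, 0%N) : nat * nat).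
Local Notation pp := (pp CS).
Local Notation qq := (qq CS).

Fixpoint gamI (b : bool) (tl : seq (nat * nat)) : seq nat :=
  if tl is st :: tl' then (if b then st.2 else st.1) :: gamI (~~ b) tl' else [::].

Definition cp (st : nat * nat) := (nth d0 CS st.1, nth d0 CS st.2).

Lemma gamT_cp b tl : gamT b (map cp tl) = map (nth d0 CS) (gamI b tl).
Proof. by elim: tl b => [|st tl IH] b //=; rewrite IH; case: b. Qed.

Lemma step_R st st' i i' : tile_ok CS st -> tile_ok CS st' -> adj st st' ->
  i \in [:: st.1; st.2] -> i' \in [:: st'.1; st'.2] -> Rc (nth d0 CS i) (nth d0 CS i').
Proof.
case/and4P => h1 h2 h3 h4; case/and4P => h1' h2' h3' /forallP h4' /eqP had.
rewrite !inE => hi hi'.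
have hii : (i <= st.2)%N by case/orP: hi => /eqP ->.
have hi'1 : (st'.1 <= i')%N by case/orP: hi' => /eqP ->.
have hi'2 : (i' <= st'.2)%N by case/orP: hi' => /eqP ->.
have hlt : (i < st'.1)%N by lia.
have hq' : (qq i' <= qq st'.2)%N by case/orP: hi' => /eqP ->.
have hq : (qq st'.2 < qq i)%N by have := h4' (Ordinal hlt).
apply/andP; split.
  apply: pp_lt => //; lia.
rewrite -/(qq i') -/(qq i); lia.
Qed.

Lemma gam_chain tl b : all (tile_ok CS) tl -> sorted adj tl ->
  sorted Rc (map (nth d0 CS) (gamI b tl)).
Proof.
rewrite sorted_map.
elim: tl b => [|st tl IH] b //= /andP [hst hall] hs.
case: tl IH hall hs => [|st' tl] IH hall hs //=.
move: (hs) => /= /andP [had hs'].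
apply/andP; split.
  have ht' : tile_ok CS st' by case/andP: hall.
  apply: (step_R hst ht' had); by case: b; rewrite !inE eqxx ?orbT.
by have := IH (~~ b) hall hs'.
Qed.

Lemma starts_chain tl : all (tile_ok CS) tl -> sorted adj tl ->
  sorted Rc (map (nth d0 CS) (map fst tl)).
Proof.
rewrite sorted_map.
elim: tl => [|st tl IH] //= /andP [hst hall] hs.
case: tl IH hall hs => [|st' tl] IH hall hs //=.
move: (hs) => /= /andP [had hs'].
apply/andP; split.
  have ht' : tile_ok CS st' by case/andP: hall.
  apply: (step_R hst ht' had); by rewrite !inE eqxx.
exact: IH.
Qed.

Lemma gam_mem tl b : all (tile_ok CS) tl -> all (mem CS) (map (nth d0 CS) (gamI b tl)).
Proof.
elim: tl b => [|st tl IH] b //= /andP [/and4P [h1 h2 _ _] hall].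
rewrite IH // andbT; apply: mem_nth; case: b => //; exact: (leq_ltn_trans h1 h2).
Qed.

Lemma starts_mem tl : all (tile_ok CS) tl -> all (mem CS) (map (nth d0 CS) (map fst tl)).
Proof.
elim: tl => [|st tl IH] //= /andP [/and4P [h1 h2 _ _] hall].
rewrite IH // andbT; apply: mem_nth; exact: (leq_ltn_trans h1 h2).
Qed.

Lemma sumd_tiles tl : all (tile_ok CS) tl ->
  ((sumt tl)%:Z - (size tl)%:Z <= sumd Lc (map cp tl))%R.
Proof.
elim: tl => [|st tl IH] //= /andP [/and4P [h1 h2 h3 _] hall].
have := IH hall.
have hm := @pp_mono CS srt st.1 (st.2 - st.1) ltac:(lia).
have e : (st.1 + (st.2 - st.1) = st.2)%N by lia.
rewrite e in hm.
rewrite /Lc /=. move: h3 hm; rewrite /qq /pp /=. lia.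
Qed.

Theorem core : (12 <= size CS)%N ->
  exists s c, [/\ sorted Rc s, odd (size s), all (mem CS) s, c \in CS &
                  ((size CS)%:Z <= 20 * (Zv Lc s - Lc c))%R].
Proof.
move=> hm.
have [x0 [s0 eCS]] : exists x0 s0, CS = x0 :: s0 by case: CS hm => // x s; exists x, s.
have [cm [hcm hmin]] := exists_min Lc x0 s0.
rewrite -eCS in hcm hmin.
case: (Classical_Prop.classic (exists s, [/\ sorted Rc s, odd (size s), all (mem CS) s &
                  ((size CS)%:Z <= 20 * (Zv Lc s - Lc cm))%R])) => [[s [h1 h2 h3 h4]]|Hn].
  by exists s, cm.
exfalso.
set m := size CS.
have H : forall s, sorted Rc s -> odd (size s) -> all (mem CS) s ->
    (20 * (Zv Lc s - Lc cm) < m%:Z)%R.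
  move=> s h1 h2 h3; rewrite ltNge; apply/negP => h4; apply: Hn; by exists s.
have hmu : forall c, c \in CS -> (Lc cm <= Lc c)%R by exact: hmin.
have chainb : forall x l, sorted Rc (x :: l) -> all (mem CS) (x :: l) ->
    (10 * TV Lc (x :: l) < m%:Z)%R /\ (20 * ((size l)%:Z - 2) < m%:Z)%R.
  move=> x l hs ha.
  have hmu' : forall c, c \in x :: l -> (Lc cm <= Lc c)%R.
    by move=> c hc; apply: hmu; move/allP: ha => /(_ c hc).
  have hx := hmu' x (mem_head _ _).
  have [s [s1 s2 s3]] := @TV_lemma Lc (size l) l x (Lc cm) (leqnn _) hmu'.
  have [s' [s1' s2' s3']] := len_lemma hmu'.
  have hss : forall s, subseq s (x :: l) -> sorted Rc s /\ all (mem CS) s.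
    move=> t ht; split; first exact: (subseq_sorted Rc_tr ht hs).
    apply/allP => c hc; move/allP: ha; apply; exact: (mem_subseq ht).
  have [t1 t2] := hss s s1; have [t1' t2'] := hss s' s1'.
  have := H s t1 s2 t2; have := H s' t1' s2' t2'.
  lia.
have hmm : (m <= m)%N by [].
have [a1 a2 a3 a4 a5] := tl_aux_ok srt (leqnn m) hmm.
set tl := tl_aux CS m m in a1 a2 a3 a4 a5.
have tlne : tl != [::] by rewrite -a4; rewrite /m eCS.
move: a1 a2 a3 a4 a5 tlne.
case Etl: tl => [|st tl'] // a1 a2 a3 a4 a5 _.
have [g1a g1b] : (10 * TV Lc (map (nth d0 CS) (gamI true (st :: tl'))) < m%:Z)%R /\ true.
  split => //. rewrite /=. 
  have [] := chainb (nth d0 CS st.2) (map (nth d0 CS) (gamI false tl')).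
    by have := gam_chain true a1 a2.
    by have := gam_mem true a1.
  by [].
have [g0a g0b] : (10 * TV Lc (map (nth d0 CS) (gamI false (st :: tl'))) < m%:Z)%R /\ true.
  split => //. rewrite /=.
  have [] := chainb (nth d0 CS st.1) (map (nth d0 CS) (gamI true tl')).
    by have := gam_chain false a1 a2.
    by have := gam_mem false a1.
  by [].
have [sa sb] : (10 * TV Lc (map (nth d0 CS) (map fst (st :: tl'))) < m%:Z)%R /\
               (20 * ((size tl')%:Z - 2) < m%:Z)%R.
  have [] := chainb (nth d0 CS st.1) (map (nth d0 CS) (map fst tl')).
    by have := starts_chain a1 a2.
    by have := starts_mem a1.
  by rewrite !size_map.
have htv := TV_tiles Lc (map cp (st :: tl')).
rewrite !gamT_cp in htv.
have hsum := sumd_tiles a1.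
have hst : (20 * (Lc (nth d0 CS st.2) - Lc cm) < m%:Z)%R.
  have := H [:: nth d0 CS st.2] erefl erefl; rewrite Zv1.
  apply; rewrite /= andbT; apply: mem_nth.
  by case/andP: a1 => /and4P [].
have hs1 : (Lc cm <= Lc (nth d0 CS st.1))%R.
  apply: hmu; apply: mem_nth; case/andP: a1 => /and4P [h1 h2 _ _] _; exact: (leq_ltn_trans h1 h2).
have mfc : forall l, map fst (map cp l) = map (nth d0 CS) (map fst l).
  by elim => //= a l ->.
have htv' : (sumd Lc (map cp tl') <= TV Lc (map (nth d0 CS) (gamI true (st :: tl')))
     + TV Lc (map (nth d0 CS) (gamI false (st :: tl')))
     + 2 * TV Lc (map (nth d0 CS) (map fst (st :: tl'))))%R.
  by move: htv; rewrite mfc.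
have e1 : sumd Lc (map cp (st :: tl')) =
   (Lc (nth d0 CS st.2) - Lc (nth d0 CS st.1) + sumd Lc (map cp tl'))%R by [].
rewrite e1 in hsum.
have hm' : (12 <= m)%N by [].
have es : size (st :: tl') = (size tl').+1 by [].
rewrite es in hsum.
move: g1a g0a sa sb hst hs1 hsum htv' a3 hm'.
set A := TV Lc _; set B := TV Lc _; set C := TV Lc _.
lia.
Qed.

End Core.
Section Zig.
Variables (T : eqType) (r : rel T) (fx fy : nat -> T) (nX nY : nat) (CS : seq (nat * nat)).
Hypothesis hx : forall k, (k.+1 < nX)%N -> r (fx k) (fx k.+1).
Hypothesis hy : forall k, (k.+1 < nY)%N -> r (fy k.+1) (fy k).
Hypothesis hcb : forall c : nat * nat, c \in CS -> (c.1 < nX)%N && (c.2 < nY)%N.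
Hypothesis hcxy : forall c : nat * nat, c \in CS -> r (fx c.1) (fy c.2).
Hypothesis hcyx : forall c : nat * nat, c \in CS -> r (fy c.2) (fx c.1).
Hypothesis injx : forall i j, (i < nX)%N -> (j < nX)%N -> fx i = fx j -> i = j.
Hypothesis injy : forall i j, (i < nY)%N -> (j < nY)%N -> fy i = fy j -> i = j.
Hypothesis dxy : forall i j, (i < nX)%N -> (j < nY)%N -> fx i <> fy j.

Local Notation pos := (nat + nat)%type.
Local Notation d0 := ((0%N, 0%N) : nat * nat).
Definition vp (u : pos) : T := match u with inl k => fx k | inr k => fy k end.
Definition validp (u : pos) : bool := match u with inl k => (k < nX)%N | inr k => (k < nY)%N end.
Definition rp (u v : pos) : bool := r (vp u) (vp v).

Fixpoint xr (P n : nat) : seq pos := if n is n'.+1 then inl P.+1 :: xr P.+1 n' else [::].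
Fixpoint yd (a n : nat) : seq pos := if n is n'.+1 then inr a.-1 :: yd a.-1 n' else [::].

Lemma xr_path P n : (P + n < nX)%N -> path rp (inl P) (xr P n).
Proof.
elim: n P => [|n IH] P //= h; apply/andP; split.
  by rewrite /rp /=; apply: hx; lia.
by apply: IH; lia.
Qed.

Lemma xr_last P n : last (inl P) (xr P n) = inl (P + n).
Proof. by elim: n P => [|n IH] P /=; rewrite ?addn0 // IH addSnnS. Qed.

Lemma mem_xr P n u : (u \in xr P n) = (if u is inl k then (P < k <= P + n)%N else false).
Proof.
elim: n P => [|n IH] P /=; first by rewrite in_nil; case: u => // k; lia.
rewrite in_cons IH {IH}; case: u => [k|k] //=.
apply/idP/idP; [case/orP => [/eqP [->]|]; lia | move=> h].
by case: (ltngtP k P.+1) => [||->]; rewrite ?eqxx //; lia.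
Qed.

Lemma xr_uniq P n : uniq (xr P n).
Proof.
elim: n P => [|n IH] P //=; rewrite IH andbT mem_xr; lia.
Qed.

Lemma xr_size P n : size (xr P n) = n.
Proof. by elim: n P => [|n IH] P //=; rewrite IH. Qed.

Lemma xr_valid P n : (P + n < nX)%N -> all validp (xr P n).
Proof. elim: n P => [|n IH] P //= h; rewrite IH; [|lia]; rewrite andbT; lia. Qed.

Lemma yd_path a n : (n <= a)%N -> (a < nY)%N -> path rp (inr a) (yd a n).
Proof.
elim: n a => [|n IH] a //= h1 h2; apply/andP; split.
  rewrite /rp /=; case: a h1 h2 => // a _ h2; exact: hy.
by apply: IH; lia.
Qed.

Lemma yd_last a n : (n <= a)%N -> last (inr a) (yd a n) = inr (a - n).
Proof.
elim: n a => [|n IH] a //= h; first by rewrite subn0.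
rewrite IH; last lia. congr inr; lia.
Qed.

Lemma mem_yd a n u : (n <= a)%N ->
  (u \in yd a n) = (if u is inr k then (a - n <= k < a)%N else false).
Proof.
elim: n a => [|n IH] a /= h; first by rewrite in_nil; case: u => // k; lia.
rewrite in_cons IH {IH}; last lia. case: u => [k|k] //=.
apply/idP/idP; [case/orP => [/eqP [->]|]; lia | move=> h'].
by case: (ltngtP k a.-1) => [||->]; rewrite ?eqxx //; lia.
Qed.

Lemma yd_uniq a n : (n <= a)%N -> uniq (yd a n).
Proof.
elim: n a => [|n IH] a h //=; rewrite IH; last lia. rewrite andbT mem_yd; lia.
Qed.

Lemma yd_size a n : size (yd a n) = n.
Proof. by elim: n a => [|n IH] a //=; rewrite IH. Qed.

Lemma yd_valid a n : (n <= a)%N -> (a < nY)%N -> all validp (yd a n).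
Proof. elim: n a => [|n IH] a //= h1 h2; rewrite IH; [|lia|lia]; rewrite andbT; lia. Qed.

Fixpoint zz (P : nat) (s : seq (nat * nat)) : seq pos :=
  match s with
  | [::] => [::]
  | c :: s1 => xr P (c.1 - P) ++ inr c.2 ::
      (match s1 with
       | [::] => yd c.2 c.2
       | d :: s2 => yd c.2 (c.2 - d.2) ++ inl d.1 :: zz d.1 s2
       end)
  end.

Lemma inl_notin_yd a n k : (n <= a)%N -> (inl k \in yd a n) = false.
Proof. by move=> h; rewrite mem_yd. Qed.

Lemma inr_notin_xr P n k : (inr k \in xr P n) = false.
Proof. by rewrite mem_xr. Qed.

Lemma zz_ok n : forall P s, (size s <= n)%N -> odd (size s) -> sorted Rc s ->
  all (mem CS) s -> (P <= (head d0 s).1)%N -> (P < nX)%N ->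
  [/\ path rp (inl P) (zz P s), last (inl P) (zz P s) = inr 0%N,
     Posz (size (zz P s)) = (Zv Lc s - Posz P)%R, all validp (zz P s) &
     [/\ uniq (inl P :: zz P s), (forall k, inl k \in zz P s -> (P < k)%N) &
         (forall k, inr k \in zz P s -> (k <= (head d0 s).2)%N)]].
Proof.
elim: n => [|n IH] P [|c s1] //= hs hodd hsrt /andP [hc hall] hP hPX.
have /andP [hc1 hc2] := hcb hc.
have eP : (P + (c.1 - P) = c.1)%N by lia.
case: s1 hs hodd hsrt hall => [|d s2] hs hodd hsrt hall.
  clear IH hs hodd hsrt hall.
  split.
  - rewrite cat_path xr_path; last lia.
    rewrite xr_last eP /= {1}/rp /= hcxy //=. apply: yd_path => //.
  - by rewrite last_cat xr_last /= yd_last // subnn.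
  - rewrite size_cat xr_size /= yd_size Zv1 (LcE c). lia.
  - rewrite all_cat xr_valid; last lia. by rewrite /= hc2 yd_valid.
  - split.
    + rewrite /= mem_cat mem_xr in_cons inl_notin_yd // ltnn /= cat_uniq xr_uniq /=.
      apply/and3P; split.
      * rewrite inr_notin_xr /=. apply/hasPn => u; rewrite mem_yd //.
        by case: u => // k _; rewrite mem_xr.
      * by rewrite mem_yd // ltnn andbF.
      * exact: yd_uniq.
    + move=> k; rewrite mem_cat mem_xr in_cons inl_notin_yd //=; lia.
    + move=> k; rewrite mem_cat inr_notin_xr in_cons mem_yd //=.
      case/orP => [/eqP [->] //|]; lia.
move: (hsrt) => /= /andP [/andP [hcd1 hcd2] hsrt2].
have /andP [hd hall2] := hall.
have /andP [hd1 hd2] := hcb hd.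
have hodd2 : odd (size s2) by move: hodd => /=; rewrite negbK.
have hs2 : (size s2 <= n)%N by move: hs => /=; lia.
have hsrt3 : sorted Rc s2 by move: hsrt2; case: (s2) => //= e s3 /andP [].
have [he1 he2] : (d.1 <= (head d0 s2).1)%N /\ ((head d0 s2).2 < d.2)%N.
  move: hsrt2 hodd2; case: (s2) => //= e s3 /andP [/andP [h1 h2] _] _; lia.
have [i1 i2 i3 i4 [i5 i6 i7]] := IH d.1 s2 hs2 hodd2 hsrt3 hall2 he1 hd1.
clear IH hs hodd hsrt hall hall2 hodd2 hs2 hsrt2 hsrt3.
have eB : last (inr c.2) (yd c.2 (c.2 - d.2)) = inr d.2.
  rewrite yd_last; last lia. congr inr; lia.
split.
- rewrite cat_path xr_path; last lia.
  rewrite xr_last eP /= {1}/rp /= hcxy //= cat_path yd_path //; last lia.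
  by rewrite eB /= {1}/rp /= hcyx.
- by rewrite last_cat xr_last /= last_cat eB /=.
- rewrite size_cat xr_size /= size_cat yd_size /= Zv2 (LcE c) (LcE d). move: i3. lia.
- rewrite all_cat xr_valid; last lia.
  by rewrite /= hc2 all_cat yd_valid //=; [rewrite hd1 i4 | lia].
- split.
  + have hnl : forall k, inl k \in yd c.2 (c.2 - d.2) = false by move=> k; apply: inl_notin_yd; lia.
    have hcd : (c.2 - d.2 <= c.2)%N by lia.
    rewrite /= mem_cat mem_xr in_cons mem_cat hnl /= in_cons ltnn /=.
    apply/andP; split.
      apply/negP => /orP [/eqP [h]|/i6]; lia.
    rewrite cat_uniq xr_uniq /=.
    apply/and3P; split.
    * rewrite inr_notin_xr /=. apply/hasPn => u; rewrite mem_cat in_cons.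
      case: u => [k|k] /=; last by rewrite mem_xr.
      rewrite hnl /= mem_xr. case/orP => [/eqP [->]|/i6]; lia.
    * rewrite mem_cat negb_or mem_yd // ltnn andbF /= in_cons.
      apply/negP => /orP [/eqP //|/i7]; lia.
    * rewrite cat_uniq yd_uniq // i5 andbT.
      apply/hasPn => u; rewrite in_cons.
      case: u => [k|k] /=; first by rewrite hnl.
      rewrite mem_yd //. move/i7; lia.
  + have hnl : forall k, inl k \in yd c.2 (c.2 - d.2) = false by move=> k; apply: inl_notin_yd; lia.
    move=> k; rewrite mem_cat mem_xr in_cons mem_cat hnl in_cons /=.
    case/orP => [h|]; first lia.
    case/orP => [/eqP [->]|/i6]; lia.
  + have hcd : (c.2 - d.2 <= c.2)%N by lia.
    move=> k; rewrite mem_cat inr_notin_xr /= in_cons mem_cat mem_yd // in_cons.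
    case/orP => [/eqP [->] //|]. case/orP => [h|]; first lia.
    case/orP => [/eqP //|/i7]; lia.
Qed.

Lemma vp_inj u v : validp u -> validp v -> vp u = vp v -> u = v.
Proof.
case: u => [i|i]; case: v => [j|j] /= hu hv h.
- by rewrite (injx hu hv h).
- by case: (dxy hu hv h).
- by case: (dxy hv hu (esym h)).
- by rewrite (injy hu hv h).
Qed.

Lemma zig_path s : odd (size s) -> sorted Rc s -> all (mem CS) s -> (0 < nX)%N ->
  exists Pth : seq T, [/\ path r (fx 0) Pth, uniq (fx 0 :: Pth),
     last (fx 0) Pth = fy 0 & Posz (size Pth) = Zv Lc s].
Proof.
move=> hodd hsrt hall hX.
have [i1 i2 i3 i4 [i5 _ _]] := @zz_ok (size s) 0 s (leqnn _) hodd hsrt hall (leq0n _) hX.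
exists (map vp (zz 0 s)); split.
- by rewrite -[fx 0]/(vp (inl 0)) path_map.
- rewrite -[fx 0 :: _]/(map vp (inl 0 :: zz 0 s)) map_inj_in_uniq //.
  have hv : all validp (inl 0 :: zz 0 s) by rewrite /= hX.
  move=> u v hu hv'; apply: vp_inj; [exact: (allP hv u hu) | exact: (allP hv v hv')].
- by rewrite -[fx 0]/(vp (inl 0)) last_map i2.
- rewrite size_map i3. lia.
Qed.

End Zig.
Section Side.
Variables (T : finType) (e : rel T) (X Y : seq T).
Hypothesis esym : symmetric e.
Hypothesis dXY : [disjoint X & Y].
Hypothesis deg : forall x, x \in X -> (#|[set y in Y | e x y]| <= 1)%N.
Hypothesis hm : (12 <= #|chords e X Y|)%N.
Variables (fx fy : nat -> T) (ix iy : T -> nat).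
Hypothesis fxX : forall k, (k < size X)%N -> fx k \in X.
Hypothesis fyY : forall k, (k < size Y)%N -> fy k \in Y.
Hypothesis fx_inj : forall i j, (i < size X)%N -> (j < size X)%N -> fx i = fx j -> i = j.
Hypothesis fy_inj : forall i j, (i < size Y)%N -> (j < size Y)%N -> fy i = fy j -> i = j.
Hypothesis ixP : forall x, x \in X -> (ix x < size X)%N && (fx (ix x) == x).
Hypothesis iyP : forall y, y \in Y -> (iy y < size Y)%N && (fy (iy y) == y).
Hypothesis fx_edge : forall k, (k.+1 < size X)%N -> path_edge X (fx k) (fx k.+1).
Hypothesis fy_edge : forall k, (k.+1 < size Y)%N -> path_edge Y (fy k) (fy k.+1).

Definition lefst (a b : nat * nat) : bool := (a.1 <= b.1)%N.
Definition CSg : seq (nat * nat) :=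
  sort lefst [seq (ix c.1, iy c.2) | c <- enum (chords e X Y)].

Lemma CSg_mem (c : nat * nat) : c \in CSg ->
  exists x y, [/\ x \in X, y \in Y, e x y & c = (ix x, iy y)].
Proof.
rewrite mem_sort => /mapP [[x y]]; rewrite mem_enum inE /= => /andP [/andP [hx hy] hxy] ->.
by exists x, y.
Qed.

Lemma CSg_ok (c : nat * nat) : c \in CSg ->
  [/\ (c.1 < size X)%N, (c.2 < size Y)%N & e (fx c.1) (fy c.2)].
Proof.
case/CSg_mem => x [y [hx hy hxy ->]] /=.
have /andP [h1 /eqP h2] := ixP hx; have /andP [h3 /eqP h4] := iyP hy.
by rewrite h1 h3 h2 h4.
Qed.

Lemma CSg_size : size CSg = #|chords e X Y|.
Proof. by rewrite /CSg size_sort size_map -cardE. Qed.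

Lemma CSg_fst (a b : nat * nat) : a \in CSg -> b \in CSg -> a.1 = b.1 -> a = b.
Proof.
case/CSg_mem => x [y [hx hy hxy ->]]; case/CSg_mem => x' [y' [hx' hy' hxy' ->]] /= h.
have /andP [_ /eqP h1] := ixP hx; have /andP [_ /eqP h2] := ixP hx'.
have ex : x = x' by rewrite -h1 -h2 h.
subst x'.
have /card_le1_eqP hc := deg hx.
have ey : y = y' by apply: hc; rewrite inE ?hy ?hxy ?hy' ?hxy'.
by rewrite ey.
Qed.

Lemma CSg_uniq : uniq CSg.
Proof.
rewrite /CSg sort_uniq map_inj_in_uniq ?enum_uniq //.
move=> [x y] [x' y']; rewrite !mem_enum !inE /= => /andP [/andP [hx hy] _] /andP [/andP [hx' hy'] _] [h1 h2].
have /andP [_ /eqP e1] := ixP hx; have /andP [_ /eqP e2] := ixP hx'.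
have /andP [_ /eqP e3] := iyP hy; have /andP [_ /eqP e4] := iyP hy'.
by rewrite -e1 -e2 -e3 -e4 h1 h2.
Qed.

Lemma sorted_lt (s : seq (nat * nat)) : sorted lefst s -> uniq s ->
  (forall a b, a \in s -> b \in s -> a.1 = b.1 -> a = b) -> sorted ltfst s.
Proof.
elim: s => [|a s IH] //=.
case: s IH => [|b s] IH //= /andP [hab hs] /andP [ha hu] hd.
apply/andP; split.
  have hab' : (a.1 <= b.1)%N := hab.
  rewrite /ltfst ltn_neqAle hab' andbT; apply/eqP => h.
  have := hd a b (mem_head _ _) ltac:(by rewrite !inE eqxx orbT) h.
  by move=> e1; move: ha; rewrite e1 mem_head.
apply: IH => //. move=> u v hu1 hv1; apply: hd; by rewrite inE ?hu1 ?hv1 orbT.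
Qed.

Lemma CSg_sorted : sorted ltfst CSg.
Proof.
apply: sorted_lt; [|exact: CSg_uniq|exact: CSg_fst].
apply: sort_sorted => a b; rewrite /lefst; exact: leq_total.
Qed.

Theorem side : exists P P' : seq T,
  [/\ gpath (Hrel e X Y) (fx 0) (fy 0) P, gpath (Hrel e X Y) (fx 0) (fy 0) P' &
      ((size P)%:R + (1/20) * (#|chords e X Y|)%:R <= (size P')%:R :> rat)%R].
Proof.
have hm' : (12 <= size CSg)%N by rewrite CSg_size.
have [s [c [hs hodd hall hc hineq]]] := core CSg_sorted hm'.
have hX : (0 < size X)%N by case: (CSg_ok hc) => h _ _; lia.
have hx : forall k, (k.+1 < size X)%N -> Hrel e X Y (fx k) (fx k.+1).
  by move=> k hk; rewrite /Hrel fx_edge.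
have hy : forall k, (k.+1 < size Y)%N -> Hrel e X Y (fy k.+1) (fy k).
  move=> k hk; rewrite /Hrel; have := fy_edge hk; rewrite /path_edge orbC => ->.
  by rewrite orbT.
have hcb : forall c : nat * nat, c \in CSg -> (c.1 < size X)%N && (c.2 < size Y)%N.
  by move=> d hd; case: (CSg_ok hd) => -> ->.
have hcxy : forall c : nat * nat, c \in CSg -> Hrel e X Y (fx c.1) (fy c.2).
  move=> d hd; case: (CSg_ok hd) => h1 h2 h3.
  by rewrite /Hrel /chord h3 fxX // fyY // !orbT.
have hcyx : forall c : nat * nat, c \in CSg -> Hrel e X Y (fy c.2) (fx c.1).
  move=> d hd; case: (CSg_ok hd) => h1 h2 h3.
  by rewrite /Hrel /chord esym h3 fxX // fyY // !orbT.
have dxy : forall i j, (i < size X)%N -> (j < size Y)%N -> fx i <> fy j.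
  move=> i j hi hj h; have := fxX hi; rewrite h => h1.
  by have := disjointFr dXY h1; rewrite fyY.
have [P' [p1 p2 p3 p4]] := zig_path hx hy hcb hcxy hcyx fx_inj fy_inj dxy hodd hs hall hX.
have [P [q1 q2 q3 q4]] := zig_path hx hy hcb hcxy hcyx fx_inj fy_inj dxy
  (s := [:: c]) erefl erefl ltac:(by rewrite /= hc) hX.
exists P, P'; split; try by split.
rewrite Zv1 in q4.
have hn : (#|chords e X Y| + 20 * size P <= 20 * size P')%N.
  move: hineq; rewrite CSg_size -p4 -q4. lia.
have : ((#|chords e X Y| + 20 * size P)%:R <= (20 * size P')%:R :> rat)%R by rewrite ler_nat.
rewrite natrD !natrM. lra.
Qed.

End Side.
Lemma sub_lt n k : (0 < n)%N -> (n.-1 - k < n)%N. Proof. lia. Qed.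
Lemma sub_inj n i j : (i < n)%N -> (j < n)%N -> (n.-1 - i = n.-1 - j)%N -> i = j. Proof. lia. Qed.
Lemma sub_sub n i : (i < n)%N -> (n.-1 - (n.-1 - i) = i)%N. Proof. lia. Qed.
Lemma sub_succ n k : (k.+1 < n)%N -> (n.-1 - k = (n.-1 - k.+1).+1)%N. Proof. lia. Qed.
Lemma sub_lt2 n k : (k.+1 < n)%N -> ((n.-1 - k.+1).+1 < n)%N. Proof. lia. Qed.

Lemma nth_zip_edge (T : eqType) (x0 : T) (s : seq T) k :
  (k.+1 < size s)%N -> (nth x0 s k, nth x0 s k.+1) \in zip s (behead s).
Proof.
elim: s k => [|a s IH] k //=.
case: s IH => [|b s] IH //= h.
case: k h => [|k] h; first exact: mem_head.
rewrite in_cons; apply/orP; right; exact: (IH k h).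
Qed.

Theorem lemma4p6 :
  exists c : rat, (0 < c)%R /\
  forall (T : finType) (e : rel T), symmetric e -> irreflexive e ->
  forall (xt yt : T) (Xs Ys : seq T),
    let X := xt :: Xs in
    let Y := yt :: Ys in
    let xb := last xt Xs in
    let yb := last yt Ys in
    gpath e xt xb Xs -> gpath e yt yb Ys ->
    [disjoint X & Y] ->
    let m := #|chords e X Y| in
    12 <= m ->
    (forall x, x \in X -> #|[set y in Y | e x y]| <= 1) ->
    (exists P P' : seq T,
        [/\ gpath (Hrel e X Y) xt yt P, gpath (Hrel e X Y) xt yt P' &
            ((size P)%:R + c * m%:R <= (size P')%:R)%R]) /\
    (exists Q Q' : seq T,
        [/\ gpath (Hrel e X Y) xb yb Q, gpath (Hrel e X Y) xb yb Q' &
            ((size Q)%:R + c * m%:R <= (size Q')%:R)%R]).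
Proof.
exists (1/20)%R; split; first by [].
move=> T e esym _ xt yt Xs Ys X Y xb yb [_ uX _] [_ uY _] dXY m hm deg.
have hXn : (0 < size X)%N by [].
have hYn : (0 < size Y)%N by [].
split.
- have := @side T e X Y esym dXY deg hm (nth xt X) (nth yt Y) (fun x => index x X) (fun y => index y Y).
  case.
  + by move=> k hk; apply: mem_nth.
  + by move=> k hk; apply: mem_nth.
  + by move=> i j hi hj /eqP; rewrite nth_uniq // => /eqP.
  + by move=> i j hi hj /eqP; rewrite nth_uniq // => /eqP.
  + by move=> x hx; rewrite index_mem hx nth_index ?eqxx.
  + by move=> y hy; rewrite index_mem hy nth_index ?eqxx.
  + by move=> k hk; rewrite /path_edge nth_zip_edge.
  + by move=> k hk; rewrite /path_edge nth_zip_edge.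
  + by move=> P [P' [h1 h2 h3]]; exists P, P'.
- pose fx k := nth xt X ((size X).-1 - k).
  pose fy k := nth yt Y ((size Y).-1 - k).
  have fx0 : fx 0%N = xb by rewrite /fx subn0 nth_last.
  have fy0 : fy 0%N = yb by rewrite /fy subn0 nth_last.
  have := @side T e X Y esym dXY deg hm fx fy (fun x => ((size X).-1 - index x X)%N)
    (fun y => ((size Y).-1 - index y Y)%N).
  case.
  + move=> k hk; apply: mem_nth; exact: sub_lt hXn.
  + move=> k hk; apply: mem_nth; exact: sub_lt hYn.
  + move=> i j hi hj /eqP; rewrite /fx (nth_uniq xt (sub_lt _ hXn) (sub_lt _ hXn) uX).
    move/eqP; exact: sub_inj hi hj.
  + move=> i j hi hj /eqP; rewrite /fy (nth_uniq yt (sub_lt _ hYn) (sub_lt _ hYn) uY).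
    move/eqP; exact: sub_inj hi hj.
  + move=> x hx; have hi : (index x X < size X)%N by rewrite index_mem.
    apply/andP; split; first exact: sub_lt hXn.
    by rewrite /fx (sub_sub hi) nth_index ?eqxx.
  + move=> y hy; have hi : (index y Y < size Y)%N by rewrite index_mem.
    apply/andP; split; first exact: sub_lt hYn.
    by rewrite /fy (sub_sub hi) nth_index ?eqxx.
  + move=> k hk; rewrite /path_edge /fx (sub_succ hk) nth_zip_edge ?orbT //.
    exact: sub_lt2 hk.
  + move=> k hk; rewrite /path_edge /fy (sub_succ hk) nth_zip_edge ?orbT //.
    exact: sub_lt2 hk.
  + by rewrite fx0 fy0 => P [P' [h1 h2 h3]]; exists P, P'.
Qed.
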